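(* With the notation below, the map $$\mathcal N^r_{x_0}\longrightarrow N_0\times N_2\times\cdots\times N_r,\qquad j^r_{x_0}g\longmapsto (g_{x_0},g^2_{x_0},\dots,g^r_{x_0})$$ is a diffeomorphism (for $r\le 1$ the target is just $N_0$).
   Context: $X$ is a smooth $n$-manifold, $x_0\in X$, $p+q=n$, $(z_1,\dots,z_n)$ a fixed coordinate system centred at $x_0$, $r\ge0$. $\mathcal N^r_{x_0}$ is the submanifold of the manifold $J^r_{x_0}M$ of $r$-jets at $x_0$ of semi-Riemannian metrics of signature $(p,q)$ consisting of those jets whose coefficients $g_{ij}$ in the coordinates $z$ satisfy the Gauss-lemma equations $\sum_j g_{ij}z_j=\sum_j g_{ij}(x_0)z_j$ up to order $r$. For $k\ge1$, $N_k$ is the vector space of $(k+2)$-covariant tensors $T$ on $T_{x_0}X$ that are symmetric in the first two indices and in the last $k$ indices, and whose cyclic sum over the last $k+1$ indices vanishes: $T_{ijk_1\dots k_k}+T_{ik_kjk_1\dots k_{k-1}}+\cdots+T_{ik_1\dots k_kj}=0$; $N_0$ is the open set of symmetric bilinear forms of signature $(p,q)$ on $T_{x_0}X$. For $j^r_{x_0}g\in\mathcal N^r_{x_0}$ and $2\le s\le r$, $g^s_{x_0}$ is the tensor $\sum \frac{\partial^s g_{ij}}{\partial z_{k_1}\cdots\partial z_{k_s}}(x_0)\,dz_i\otimes dz_j\otimes dz_{k_1}\otimes\cdots\otimes dz_{k_s}$ (the $s$-th normal tensor of $g$ at $x_0$), and $g_{x_0}$ is the value of the metric at $x_0$. *)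

(* Defs.v *)
From Stdlib Require Import Reals Factorial.
From mathcomp Require Import all_boot.
Set Implicit Arguments.
Unset Strict Implicit.
Unset Printing Implicit Defensive.
Local Open Scope R_scope.

Definition near_box {I : Type} (x y : I -> R) (d : R) : Prop :=
  forall i, (Rabs (y i - x i) < d) : Prop.

Definition is_open {I : Type} (U : (I -> R) -> Prop) : Prop :=
  forall x, U x -> exists d, (0 < d) /\ forall y, near_box x y d -> U y.

Definition cont_on {I : Type} (U : (I -> R) -> Prop) (h : (I -> R) -> R) : Prop :=
  forall x, U x -> forall e, (0 < e) ->
    exists d, (0 < d) /\ forall y, near_box x y d -> (Rabs (h y - h x) < e).

Definition shift {I : eqType} (x : I -> R) (i : I) (t : R) : I -> R :=
  fun j => if j == i then (x j + t) else x j.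

Fixpoint Ck {I : eqType} (k : nat) (U : (I -> R) -> Prop) (h : (I -> R) -> R) : Prop :=
  match k with
  | 0 => cont_on U h
  | k'.+1 => cont_on U h /\
      exists D : I -> (I -> R) -> R,
        (forall i x, U x -> derivable_pt_lim (fun t => h (shift x i t)) 0 (D i x)) /\
        (forall i, Ck k' U (D i))
  end.

Definition smooth_fun {I : eqType} (U : (I -> R) -> Prop) (h : (I -> R) -> R) : Prop :=
  forall k, Ck k U h.

Definition smooth_on {I J : eqType} (A : (I -> R) -> Prop) (f : (I -> R) -> (J -> R)) : Prop :=
  forall x, A x -> exists (U : (I -> R) -> Prop) (F : (I -> R) -> (J -> R)),
    is_open U /\ U x /\ (forall j, smooth_fun U (fun v => F v j)) /\
    (forall y, A y -> U y -> f y = F y).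

Definition diffeomorphism {I J : eqType} (A : (I -> R) -> Prop) (B : (J -> R) -> Prop)
    (f : (I -> R) -> (J -> R)) : Prop :=
  (forall x, A x -> B (f x)) /\ smooth_on A f /\
  exists g : (J -> R) -> (I -> R),
    (forall y, B y -> A (g y)) /\ smooth_on B g /\
    (forall x, A x -> g (f x) = x) /\ (forall y, B y -> f (g y) = y).

(* Tensors on T_{x0}X = R^n in the coordinates z: T i j [k1;...;ks]   *)
(* is the component T_{i j k1 ... ks}.                                *)

Definition tensor (n : nat) := 'I_n -> 'I_n -> seq 'I_n -> R.

Definition sym12 n (T : tensor n) (s : nat) : Prop :=
  forall i j (k : seq 'I_n), size k = s -> T i j k = T j i k.

Definition symlast n (T : tensor n) (s : nat) : Prop :=
  forall i j (k k' : seq 'I_n), size k = s -> perm_eq k k' -> T i j k = T i j k'.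

(* cyclic sum over the last s+1 indices (j,k1,...,ks) vanishes *)
Definition cyclic_sum_zero n (T : tensor n) (s : nat) : Prop :=
  forall i j (k : seq 'I_n), size k = s ->
    \big[Rplus/0]_(m < s.+1) T i (head j (rot m (j :: k))) (behead (rot m (j :: k))) = 0.

(* N_k, k >= 1 (as a condition on the order-k block of T) *)
Definition in_Nk n (T : tensor n) (k : nat) : Prop :=
  sym12 T k /\ symlast T k /\ cyclic_sum_zero T k.

(* signature (p,q): Sylvester normal form diag(1,...,1,-1,...,-1) *)
Definition signature_pq n (p q : nat) (G : 'I_n -> 'I_n -> R) : Prop :=
  exists P : 'I_n -> 'I_n -> R, forall a b : 'I_n,
    \big[Rplus/0]_(c < n) \big[Rplus/0]_(d < n) (P c a * G c d * P d b)
      = (if a == b then (if (a < p)%N then 1 else -1) else 0).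

Definition in_N0 n (p q : nat) (G : 'I_n -> 'I_n -> R) : Prop :=
  (forall i j, G i j = G j i) /\ signature_pq p q G.

(* r-jets at x0 of metrics, in the coordinates z.  A jet is the family  *)
(* of Taylor coefficients  d^s g_ij / dz_k1...dz_ks (x0), s <= r,      *)
(* indexed by (i, j, [k1;...;ks]).                                     *)

Notation word n r := {k : seq 'I_n | (size k <= r)%N}.
Notation JIdx n r := ('I_n * 'I_n * word n r)%type.

Definition jcoef n r (x : JIdx n r -> R) : tensor n :=
  fun i j k => match (insub k : option (word n r)) with
               | Some w => x (i, j, w) | None => 0 end.

Definition jet_space n p q r (x : JIdx n r -> R) : Prop :=
  (forall s, (s <= r)%N -> sym12 (jcoef x) s /\ symlast (jcoef x) s) /\
  in_N0 p q (fun i j => jcoef x i j [::]).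

Definition taylor n r (x : JIdx n r -> R) (i j : 'I_n) (z : 'I_n -> R) : R :=
  \big[Rplus/0]_(s < r.+1)
    (/ INR (fact s) *
     \big[Rplus/0]_(k : s.-tuple 'I_n) (jcoef x i j k * \big[Rmult/1]_(l <- k) z l)).

(* Gauss-lemma equations  sum_j g_ij z_j = sum_j g_ij(x0) z_j  up to order r *)
Definition gauss n r (x : JIdx n r -> R) : Prop :=
  forall (i : 'I_n) (z : 'I_n -> R),
    \big[Rplus/0]_(j < n) (taylor x i j z * z j)
    = \big[Rplus/0]_(j < n) (jcoef x i j [::] * z j).

Definition normal_jets n p q r (x : JIdx n r -> R) : Prop :=
  jet_space p q x /\ gauss x.

(* Target N_0 x N_2 x ... x N_r : blocks of orders 0, 2, ..., r.      *)

Notation tword n r := {k : seq 'I_n | (size k <= r)%N && (size k != 1%N)}.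
Notation TIdx n r := ('I_n * 'I_n * tword n r)%type.

Definition tcoef n r (y : TIdx n r -> R) : tensor n :=
  fun i j k => match (insub k : option (tword n r)) with
               | Some w => y (i, j, w) | None => 0 end.

Definition normal_target n p q r (y : TIdx n r -> R) : Prop :=
  in_N0 p q (fun i j => tcoef y i j [::]) /\
  (forall s, (2 <= s <= r)%N -> in_Nk (tcoef y) s).

Definition jet_to_normal n r (x : JIdx n r -> R) : TIdx n r -> R :=
  fun t => jcoef x t.1.1 t.1.2 (val t.2).

(* Main.v *)
Require Import Defs.
From HB Require Import structures.
From Stdlib Require Import Reals Lra FunctionalExtensionality Factorial.
From mathcomp Require Import all_boot.
Set Implicit Arguments. Unset Strict Implicit. Unset Printing Implicit Defensive.
Local Open Scope R_scope.
Lemma RplusA : associative Rplus. Proof. by move=> *; rewrite Rplus_assoc. Qed.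
Lemma RmultA : associative Rmult. Proof. by move=> *; rewrite Rmult_assoc. Qed.
HB.instance Definition _ := Monoid.isComLaw.Build R 0 Rplus RplusA Rplus_comm Rplus_0_l.
HB.instance Definition _ := Monoid.isComLaw.Build R 1 Rmult RmultA Rmult_comm Rmult_1_l.
HB.instance Definition _ := Monoid.isMulLaw.Build R 0 Rmult Rmult_0_l Rmult_0_r.
HB.instance Definition _ := Monoid.isAddLaw.Build R Rmult Rplus Rmult_plus_distr_r Rmult_plus_distr_l.


Lemma Ck_const (I : eqType) k (U : (I -> R) -> Prop) c : Ck k U (fun _ => c).
Proof.
elim: k c => [|k IH] c /=.
  move=> x _ e he; exists 1; split; [lra|] => y _; rewrite Rminus_diag Rabs_R0; lra.
split.
  move=> x _ e he; exists 1; split; [lra|] => y _; rewrite Rminus_diag Rabs_R0; lra.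
exists (fun _ _ => 0); split; last by move=> i; apply: IH.
move=> i x _; exact: derivable_pt_lim_const.
Qed.

Lemma Ck_proj (I : eqType) k (U : (I -> R) -> Prop) a : Ck k U (fun v => v a).
Proof.
case: k => [|k] /=.
  move=> x _ e he; exists e; split => // y; exact.
split.
  move=> x _ e he; exists e; split => // y; exact.
exists (fun i _ => if a == i then 1 else 0); split; last by move=> i; apply: Ck_const.
move=> i x _; rewrite /shift; case: (a =P i) => [->|_].
  rewrite ?eqxx.
  change (derivable_pt_lim (fun t => (fun _ => x i) t + id t) 0 1).
  rewrite -[1]Rplus_0_l.
  apply: derivable_pt_lim_plus; [exact: derivable_pt_lim_const|exact: derivable_pt_lim_id].
exact: derivable_pt_lim_const.
Qed.

Lemma smooth_coord (I J : eqType) (A : (I -> R) -> Prop) (f : (I -> R) -> J -> R) :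
  (forall j, (exists a, forall v, f v j = v a) \/ (exists c, forall v, f v j = c)) ->
  smooth_on A f.
Proof.
move=> H x _; exists (fun _ => True), f; split; [|split; [by []|split; [|by []]]].
  move=> y _; exists 1; split; [lra|by []].
move=> j k; case: (H j) => [[a Ha]|[c Hc]].
  have -> : (fun v => f v j) = (fun v => v a) by apply: functional_extensionality.
  exact: Ck_proj.
have -> : (fun v => f v j) = (fun _ => c) by apply: functional_extensionality.
exact: Ck_const.
Qed.



Lemma deriv_big (I : Type) (s : seq I) (P : pred I) (f : I -> R -> R) (df : I -> R) x0 :
  (forall i, derivable_pt_lim (f i) x0 (df i)) ->
  derivable_pt_lim (fun t => \big[Rplus/0]_(i <- s | P i) f i t) x0 (\big[Rplus/0]_(i <- s | P i) df i).
Proof.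
move=> H; elim: s => [|a s IH].
  rewrite big_nil.
  have -> : (fun t => \big[Rplus/0]_(i <- [::] | P i) f i t) = (fun _ => 0).
    by apply: functional_extensionality => t; rewrite big_nil.
  exact: derivable_pt_lim_const.
rewrite big_cons.
have -> : (fun t => \big[Rplus/0]_(i <- a :: s | P i) f i t) =
   (fun t => (if P a then f a t else 0) + \big[Rplus/0]_(i <- s | P i) f i t).
  apply: functional_extensionality => t; rewrite big_cons; case: (P a) => //; by rewrite Rplus_0_l.
case: (P a).
  exact: derivable_pt_lim_plus.
rewrite -[X in derivable_pt_lim _ _ X]Rplus_0_l.
apply: derivable_pt_lim_plus => //; exact: derivable_pt_lim_const.
Qed.

Lemma big_tuple_cons n d (F : d.+1.-tuple 'I_n -> R) :
  \big[Rplus/0]_(k : d.+1.-tuple 'I_n) F k =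
  \big[Rplus/0]_(a < n) \big[Rplus/0]_(k : d.-tuple 'I_n) F [tuple of a :: k].
Proof.
rewrite pair_big /=.
rewrite (reindex (fun p : 'I_n * d.-tuple 'I_n => [tuple of p.1 :: p.2])) //=.
exists (fun k : d.+1.-tuple 'I_n => (thead k, [tuple of behead k])) => [[a k] _|k _] /=.
  by congr pair; apply: val_inj.
by case/tupleP: k => a k; apply: val_inj.
Qed.

Lemma big_tuple0 n (F : 0.-tuple 'I_n -> R) :
  \big[Rplus/0]_(k : 0.-tuple 'I_n) F k = F [tuple].
Proof. apply: big_pred1 => k /=; symmetry; apply/eqP; exact: tuple0. Qed.



Fixpoint Poly n d (C : seq 'I_n -> R) (z : 'I_n -> R) : R :=
  match d with
  | 0 => C [::]
  | d'.+1 => \big[Rplus/0]_(a < n) (z a * Poly d' (fun w => C (a :: w)) z)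
  end.

Lemma Poly_tuple n d (C : seq 'I_n -> R) z :
  Poly d C z = \big[Rplus/0]_(k : d.-tuple 'I_n) (C k * \big[Rmult/1]_(l <- k) z l).
Proof.
elim: d C => [|d IH] C /=.
  by rewrite big_tuple0 /= big_nil Rmult_1_r.
rewrite big_tuple_cons; apply: eq_bigr => a _.
rewrite IH big_distrr; apply: eq_bigr => k _ /=.
rewrite big_cons; ring.
Qed.

Lemma Poly_ext_size n d (C C' : seq 'I_n -> R) z :
  (forall w, size w = d -> C w = C' w) -> Poly d C z = Poly d C' z.
Proof.
move=> H; rewrite !Poly_tuple; apply: eq_bigr => k _; rewrite H //; exact: size_tuple.
Qed.

Lemma Poly_sum n d M (G : nat -> seq 'I_n -> R) z :
  Poly d (fun w => \big[Rplus/0]_(m < M) G m w) z = \big[Rplus/0]_(m < M) Poly d (G m) z.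
Proof.
rewrite Poly_tuple.
under eq_bigr do rewrite big_distrl.
rewrite exchange_big; apply: eq_bigr => m _; by rewrite Poly_tuple.
Qed.

Lemma Poly_zero n d (z : 'I_n -> R) : Poly d (fun _ => 0) z = 0.
Proof. rewrite Poly_tuple big1 // => k _; ring. Qed.

Lemma Poly_rot n d m (F : seq 'I_n -> R) z :
  Poly d (fun w => F (rot m w)) z = Poly d F z.
Proof.
rewrite !Poly_tuple.
rewrite [RHS](reindex (fun k : d.-tuple 'I_n => [tuple of rot m k])) /=.
  apply: eq_bigr => k _; congr Rmult.
  by apply: perm_big; rewrite perm_sym perm_rot.
exists (fun k : d.-tuple 'I_n => [tuple of rotr m k]) => k _; apply: val_inj => /=.
  exact: rotK.
exact: rotrK.
Qed.

Definition pinv n (C : seq 'I_n -> R) := forall w w', perm_eq w w' -> C w = C w'.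

Lemma shift0 (I : eqType) (z : I -> R) a : shift z a 0 = z.
Proof. apply: functional_extensionality => j; rewrite /shift; case: (j == a) => //; ring. Qed.

Lemma deriv_shift n (z : 'I_n -> R) a b :
  derivable_pt_lim (fun t => shift z a t b) 0 (if b == a then 1 else 0).
Proof.
rewrite /shift; case: (b == a).
  change (derivable_pt_lim (fun t => (fun _ => z b) t + id t) 0 1).
  rewrite -[1]Rplus_0_l.
  apply: derivable_pt_lim_plus; [exact: derivable_pt_lim_const|exact: derivable_pt_lim_id].
exact: derivable_pt_lim_const.
Qed.

Lemma big_delta n (F : 'I_n -> R) a :
  \big[Rplus/0]_(b < n) ((if b == a then 1 else 0) * F b) = F a.
Proof.
rewrite (bigD1 a) //= eqxx big1 => [|b /negbTE ->]; ring.
Qed.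

Lemma Poly_deriv n d (C : seq 'I_n -> R) z a : pinv C ->
  derivable_pt_lim (fun t => Poly d.+1 C (shift z a t)) 0
     (INR d.+1 * Poly d (fun w => C (a :: w)) z).
Proof.
elim: d C => [|d IH] C HC.
  rewrite /=.
  have H := @deriv_big _ (index_enum 'I_n) xpredT
     (fun b t => shift z a t b * C [:: b]) (fun b => (if b == a then 1 else 0) * C [:: b]) 0.
  rewrite big_delta in H; rewrite Rmult_1_l; apply: H => b.
  rewrite -[X in derivable_pt_lim _ _ X]Rplus_0_r.
  rewrite -[X in _ + X](Rmult_0_r (shift z a 0 b)).
  apply: (derivable_pt_lim_mult (fun t => shift z a t b) (fun _ => C [:: b])).
    exact: deriv_shift.
  exact: derivable_pt_lim_const.
have Hb : forall b, pinv (fun w => C (b :: w)).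
  by move=> b w w' Hw; apply: HC; rewrite perm_cons.
have H := @deriv_big _ (index_enum 'I_n) xpredT
   (fun b t => shift z a t b * Poly d.+1 (fun w => C (b :: w)) (shift z a t))
   (fun b => (if b == a then 1 else 0) * Poly d.+1 (fun w => C (b :: w)) z +
      z b * (INR d.+1 * Poly d (fun w => C (b :: a :: w)) z)) 0.
have E : \big[Rplus/0]_(b < n) ((if b == a then 1 else 0) * Poly d.+1 (fun w => C (b :: w)) z +
      z b * (INR d.+1 * Poly d (fun w => C (b :: a :: w)) z)) =
      INR d.+2 * Poly d.+1 (fun w => C (a :: w)) z.
  rewrite [INR d.+2]S_INR; set r := INR d.+1; rewrite big_split /= big_delta.
  have -> : \big[Rplus/0]_(b < n) (z b * (INR d.+1 * Poly d (fun w => C (b :: a :: w)) z))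
        = INR d.+1 * \big[Rplus/0]_(b < n) (z b * Poly d (fun w => C (a :: b :: w)) z).
    rewrite big_distrr; apply: eq_bigr => b _.
    have -> : (fun w => C (b :: a :: w)) = (fun w => C (a :: b :: w)).
      apply: functional_extensionality => w; apply: HC.
      by rewrite -[b :: a :: w]/([:: b; a] ++ w) -[a :: b :: w]/([:: a; b] ++ w) perm_cat2r; apply/permP => P /=; by rewrite !addn0 addnC.
    simpl; ring.
  simpl Poly; rewrite /r Rmult_plus_distr_r Rmult_1_l Rplus_comm; reflexivity.
rewrite -E; apply: H => b.
have := derivable_pt_lim_mult (fun t => shift z a t b) (fun t => Poly d.+1 (fun w => C (b :: w)) (shift z a t)) 0 _ _ (deriv_shift z a b) (IH _ (Hb b)).
by rewrite shift0.
Qed.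



Lemma deriv_zero (f : R -> R) x l : (forall t, f t = 0) -> derivable_pt_lim f x l -> l = 0.
Proof.
move=> Hf Hd.
have E : f = (fun _ => 0) by apply: functional_extensionality.
rewrite E in Hd; apply: (uniqueness_limite _ _ _ _ Hd); exact: derivable_pt_lim_const.
Qed.

Lemma Poly_zero_coef n d (C : seq 'I_n -> R) : pinv C ->
  (forall z, Poly d C z = 0) -> forall w, size w = d -> C w = 0.
Proof.
elim: d C => [|d IH] C HC H w Hw.
  by case: w Hw => // _; exact: (H (fun _ => 0)).
case: w Hw => // a w [Hw].
apply: (IH (fun w => C (a :: w))) => // [w1 w2 Hp|z].
  by apply: HC; rewrite perm_cons.
have := deriv_zero (fun t => H (shift z a t)) (Poly_deriv d z a HC).
move/Rmult_integral => [E|->//].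
exfalso; exact: (not_0_INR d.+1 (Nat.neq_succ_0 d) E).
Qed.

Lemma poly1_coef (N : nat) (c : nat -> R) :
  (forall t, \big[Rplus/0]_(s < N) (c s * t ^ s) = 0) -> forall s, (s < N)%N -> c s = 0.
Proof.
elim: N c => [|N IH] c H s Hs //.
have H0 : c 0%N = 0.
  have := H 0; rewrite big_ord_recl /= big1 => [|i _]; first by rewrite Rmult_1_r Rplus_0_r.
  by rewrite /= Rmult_0_l Rmult_0_r.
case: s Hs => [//|s] Hs.
have H1 : forall t, \big[Rplus/0]_(s < N) ((c s.+1 * INR s.+1) * t ^ s) = 0.
  move=> t.
  have D := @deriv_big _ (index_enum 'I_N.+1) xpredT (fun s t => c s * t ^ s)
     (fun s => c s * (INR s * t ^ Nat.pred s)) t.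
  have D' : forall i : 'I_N.+1, derivable_pt_lim (fun t => c i * t ^ i) t (c i * (INR i * t ^ Nat.pred i)).
    move=> i; apply: derivable_pt_lim_scal; exact: derivable_pt_lim_pow.
  have := deriv_zero (fun x => H x) (D D').
  rewrite big_ord_recl [X in X + _]/= Rmult_0_l Rmult_0_r Rplus_0_l => E.
  apply: eq_trans _ E; apply: eq_bigr => i _.
  rewrite (_ : lift ord0 i = i.+1 :> nat) //; simpl Nat.pred; ring.
have := IH (fun s => c s.+1 * INR s.+1) H1 s Hs; move/Rmult_integral => [->//|E].
exfalso; exact: (not_0_INR s.+1 (Nat.neq_succ_0 s) E).
Qed.



Definition QT n (T : tensor n) i s (z : 'I_n -> R) :=
  \big[Rplus/0]_(j < n) (\big[Rplus/0]_(k : s.-tuple 'I_n) (T i j k * \big[Rmult/1]_(l <- k) z l) * z j).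

Definition FT n (T : tensor n) i (w : seq 'I_n) : R := if w is a :: w' then T i a w' else 0.

Definition CycT n (T : tensor n) i s (w : seq 'I_n) : R :=
  if size w == s.+1 then \big[Rplus/0]_(a <- w) T i a (rem a w) else 0.

Lemma QT_Poly n (T : tensor n) i s z : QT T i s z = Poly s.+1 (FT T i) z.
Proof.
rewrite /QT /=; apply: eq_bigr => j _; rewrite Rmult_comm Poly_tuple //.
Qed.

Lemma rot_form (T : eqType) (x0 : T) (w : seq T) m : (m < size w)%N ->
  rot m w = nth x0 w m :: (drop m.+1 w ++ take m w) /\
  perm_eq (drop m.+1 w ++ take m w) (rem (nth x0 w m) w).
Proof.
move=> Hm; have E : rot m w = nth x0 w m :: (drop m.+1 w ++ take m w).
  by rewrite /rot (drop_nth x0 Hm).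
split => //.
rewrite -(perm_cons (nth x0 w m)) -E.
rewrite perm_rot; apply: perm_to_rem; exact: mem_nth.
Qed.

Lemma perm_rem' (T : eqType) (a : T) (w w' : seq T) : perm_eq w w' -> a \in w ->
  perm_eq (rem a w) (rem a w').
Proof.
move=> P aw; have aw' : a \in w' by rewrite -(perm_mem P).
rewrite -(perm_cons a); apply: perm_trans (perm_to_rem aw').
apply: perm_trans P; by rewrite perm_sym perm_to_rem.
Qed.

Lemma cyc_eq n (T : tensor n) i s w : symlast T s -> size w = s.+1 ->
  \big[Rplus/0]_(m < s.+1) FT T i (rot m w) = CycT T i s w.
Proof.
move=> HS Hw; rewrite /CycT Hw eqxx.
case: w Hw => [//|x0 w'] Hw.
rewrite (big_nth x0) big_mkord -Hw; apply: eq_bigr => m _.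
have [E P] := rot_form x0 (ltn_ord m); rewrite E /=.
apply: HS => //.
rewrite (perm_size P) size_rem ?Hw //; exact: mem_nth.
Qed.

Lemma CycT_pinv n (T : tensor n) i s : symlast T s -> pinv (CycT T i s).
Proof.
move=> HS w w' P; rewrite /CycT (perm_size P).
case: eqP => // Hs.
rewrite (perm_big _ P) /=; apply: eq_big_seq => a aw'.
have aw : a \in w by rewrite (perm_mem P).
apply: HS; last exact: perm_rem'.
by rewrite size_rem // (perm_size P) Hs.
Qed.

Lemma sum_constR N c : \big[Rplus/0]_(m < N) c = INR N * c.
Proof.
elim: N => [|N IH]; first by rewrite big_ord0 /=; ring.
rewrite big_ord_recr IH S_INR /=; ring.
Qed.

Lemma Poly_Cyc n (T : tensor n) i s z : symlast T s ->
  Poly s.+1 (CycT T i s) z = INR s.+1 * QT T i s z.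
Proof.
move=> HS.
rewrite -(@Poly_ext_size _ _ (fun w => \big[Rplus/0]_(m < s.+1) FT T i (rot m w))); last first.
  by move=> w Hw; rewrite cyc_eq.
rewrite (Poly_sum s.+1 s.+1 (fun m w => FT T i (rot m w))).
under eq_bigr do rewrite Poly_rot.
by rewrite sum_constR QT_Poly.
Qed.

Lemma KEY n (T : tensor n) i s : symlast T s ->
  (forall z, QT T i s z = 0) <-> (forall w, size w = s.+1 -> CycT T i s w = 0).
Proof.
move=> HS; split => H.
  apply: Poly_zero_coef; first exact: CycT_pinv.
  by move=> z; rewrite Poly_Cyc // H Rmult_0_r.
move=> z.
have := Poly_Cyc i z HS.
rewrite (@Poly_ext_size _ _ _ (fun _ => 0)) // Poly_zero => /esym /Rmult_integral [E|//].
exfalso; exact: (not_0_INR s.+1 (Nat.neq_succ_0 s) E).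
Qed.

Lemma FT_head n (T : tensor n) i (w : seq 'I_n) d : w <> [::] -> FT T i w = T i (head d w) (behead w).
Proof. by case: w. Qed.

Lemma cyclic_iff n (T : tensor n) s : symlast T s ->
  cyclic_sum_zero T s <-> (forall i w, size w = s.+1 -> CycT T i s w = 0).
Proof.
move=> HS.
have E : forall i j k, size k = s ->
   \big[Rplus/0]_(m < s.+1) T i (head j (rot m (j :: k))) (behead (rot m (j :: k)))
   = CycT T i s (j :: k).
  move=> i j k Hk; rewrite -cyc_eq //=; last by rewrite Hk.
  apply: eq_bigr => m _; rewrite (FT_head _ _ j) //.
  by move/(f_equal size); rewrite size_rot.
split => H.
  move=> i [//|j k] [Hk]; rewrite -E //; exact: H.
move=> i j k Hk; rewrite E //; apply: H => /=; by rewrite Hk.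
Qed.



Lemma gauss_expand n r (x : JIdx n r -> R) i z :
  \big[Rplus/0]_(j < n) (taylor x i j z * z j) =
  \big[Rplus/0]_(s < r.+1) (/ INR (fact s) * QT (jcoef x) i s z).
Proof.
rewrite /taylor.
under eq_bigr do rewrite big_distrl.
rewrite exchange_big; apply: eq_bigr => s _.
rewrite /QT big_distrr; apply: eq_bigr => j _ /=; ring.
Qed.

Lemma prod_scale n (k : seq 'I_n) t z :
  \big[Rmult/1]_(l <- k) (t * z l) = t ^ size k * \big[Rmult/1]_(l <- k) z l.
Proof.
elim: k => [|a k IH]; first by rewrite !big_nil /=; ring.
rewrite !big_cons IH /=; ring.
Qed.

Lemma QT_scale n (T : tensor n) i s z t :
  QT T i s (fun l => t * z l) = t ^ s.+1 * QT T i s z.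
Proof.
rewrite /QT big_distrr; apply: eq_bigr => j _.
have -> : \big[Rplus/0]_(k : s.-tuple 'I_n) (T i j k * \big[Rmult/1]_(l <- k) (t * z l))
   = t ^ s * \big[Rplus/0]_(k : s.-tuple 'I_n) (T i j k * \big[Rmult/1]_(l <- k) z l).
  rewrite big_distrr; apply: eq_bigr => k _; rewrite prod_scale size_tuple /=; ring.
change (t ^ s.+1) with (t * t ^ s); simpl; ring.
Qed.

Lemma QT0 n (T : tensor n) i z : QT T i 0 z = \big[Rplus/0]_(j < n) (T i j [::] * z j).
Proof.
rewrite /QT; apply: eq_bigr => j _; by rewrite big_tuple0 /= big_nil Rmult_1_r.
Qed.

Lemma gauss_iff n r (x : JIdx n r -> R) :
  gauss x <-> (forall i s z, (1 <= s <= r)%N -> QT (jcoef x) i s z = 0).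
Proof.
split => H.
  move=> i s z /andP [s1 sr].
  pose c k := if k is s'.+1 then (if s' == 0%N then 0 else / INR (fact s') * QT (jcoef x) i s' z) else 0.
  have Hc : forall t, \big[Rplus/0]_(k < r.+2) (c k * t ^ k) = 0.
    move=> t.
    have G := H i (fun l => t * z l).
    rewrite gauss_expand in G.
    have E1 : \big[Rplus/0]_(j < n) (jcoef x i j [::] * (t * z j)) = t * QT (jcoef x) i 0 z.
      rewrite QT0 big_distrr; apply: eq_bigr => j _ /=; ring.
    rewrite E1 in G.
    have G' : \big[Rplus/0]_(s < r.+1) (/ INR (fact s) * (t ^ s.+1 * QT (jcoef x) i s z)) = t * QT (jcoef x) i 0 z.
      by rewrite -G; apply: eq_bigr => s' _; rewrite QT_scale.
    rewrite big_ord_recl in G'.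
    rewrite big_ord_recl big_ord_recl.
    have E2 : forall a b c0, a + b = c0 -> a = c0 -> b = 0 by move=> *; lra.
    have G'' := E2 _ _ _ G' ltac:(simpl; field).
    rewrite -[RHS]G'' /= Rmult_0_l Rmult_0_l !Rplus_0_l.
    apply: eq_bigr => k _ /=.
    rewrite !add0n; ring.
  have := poly1_coef Hc (s := s.+1); rewrite /c.
  case: eqP => [E|_]; first by rewrite E in s1.
  have Hs : (s.+1 < r.+2)%N by rewrite ltnS ltnS.
  move=> /(_ Hs) /Rmult_integral [E|//].
  exfalso; apply: (Rinv_neq_0_compat _ (INR_fact_neq_0 s) E).
move=> i z; rewrite gauss_expand big_ord_recl big1 => [|k _].
  rewrite QT0 /= Rinv_1 Rmult_1_l Rplus_0_r //.
rewrite H ?Rmult_0_r //=.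
Qed.



Definition normal_to_jet n r (y : TIdx n r -> R) : JIdx n r -> R :=
  fun t => if size (val t.2) == 1%N then 0 else tcoef y t.1.1 t.1.2 (val t.2).

Lemma jcoef_val n r (x : JIdx n r -> R) i j (w : word n r) : jcoef x i j (val w) = x (i, j, w).
Proof. by rewrite /jcoef valK. Qed.

Lemma tcoef_val n r (y : TIdx n r -> R) i j (w : tword n r) : tcoef y i j (val w) = y (i, j, w).
Proof. by rewrite /tcoef valK. Qed.

Lemma tcoef_f n r (x : JIdx n r -> R) i j k :
  tcoef (jet_to_normal x) i j k = if size k != 1%N then jcoef x i j k else 0.
Proof.
rewrite /tcoef; case: insubP => [w /andP [Hr H1] Ew|Hn].
  by rewrite H1 /jet_to_normal /= Ew.
case: ifP => // H1; rewrite /jcoef insubN //.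
by apply: contra Hn => ->.
Qed.

Lemma jcoef_g n r (y : TIdx n r -> R) i j k :
  jcoef (normal_to_jet y) i j k = if size k == 1%N then 0 else tcoef y i j k.
Proof.
rewrite /jcoef; case: insubP => [w Hr Ew|Hn].
  by rewrite /normal_to_jet /= Ew.
case: ifP => // H1; rewrite /tcoef insubN //.
by rewrite negb_and Hn.
Qed.

Section Ext.
Variables (n : nat) (T T' : tensor n) (s : nat).
Hypothesis HE : forall i j k, size k = s -> T i j k = T' i j k.

Lemma sym12_ext : sym12 T s -> sym12 T' s.
Proof. move=> H i j k Hk; rewrite -!HE //; exact: H. Qed.

Lemma symlast_ext : symlast T s -> symlast T' s.
Proof.
move=> H i j k k' Hk P; rewrite -!HE //; first exact: H.
by rewrite -(perm_size P).
Qed.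

Lemma cyclic_ext : cyclic_sum_zero T s -> cyclic_sum_zero T' s.
Proof.
move=> H i j k Hk; apply: eq_trans _ (H i j k Hk); apply: eq_bigr => m _.
by rewrite HE // size_behead size_rot /= Hk.
Qed.

Lemma QT_ext i z : QT T i s z = QT T' i s z.
Proof.
rewrite /QT; apply: eq_bigr => j _; congr Rmult; apply: eq_bigr => k _.
by rewrite HE // size_tuple.
Qed.
End Ext.

Lemma order1_zero n (T : tensor n) : sym12 T 1 -> cyclic_sum_zero T 1 ->
  forall i j k, size k = 1%N -> T i j k = 0.
Proof.
move=> HS HC i j [//|c [|//]] _.
have cyc : forall a b d, T a b [:: d] + T a d [:: b] = 0.
  move=> a b d; have := HC a b [:: d] erefl.
  by rewrite !big_ord_recr big_ord0 /= Rplus_0_l.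
have sy : forall a b d, T a b [:: d] = T b a [:: d] by move=> a b d; apply: HS.
have := cyc i j c; have := cyc c i j; have := cyc j c i.
have := sy i c j; have := sy c j i; have := sy j i c.
move=> *; lra.
Qed.

Lemma in_N0_ext n p q (G G' : 'I_n -> 'I_n -> R) : (forall i j, G i j = G' i j) -> in_N0 p q G -> in_N0 p q G'.
Proof.
move=> H; have -> : G' = G by apply: functional_extensionality => i; apply: functional_extensionality => j.
done.
Qed.

Lemma QT_zero n (T : tensor n) i s z : (forall i j k, size k = s -> T i j k = 0) -> QT T i s z = 0.
Proof.
move=> H; rewrite (@QT_ext _ _ (fun _ _ _ => 0)) //.
rewrite /QT big1 // => j _; rewrite big1 ?Rmult_0_l // => k _; ring.
Qed.

Unset Implicit Arguments.
Theorem mainTheorem4 (n p q r : nat) (hn : n = (p + q)%N) :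
  diffeomorphism (@normal_jets n p q r) (@normal_target n p q r) (@jet_to_normal n r).
Proof.
have fwd_cyc : forall x : JIdx n r -> R, normal_jets p q x ->
    forall s, (1 <= s <= r)%N -> cyclic_sum_zero (jcoef x) s.
  move=> x [[Hjs _] Hg] s /andP [s1 sr].
  have SL := (Hjs s sr).2.
  apply/(cyclic_iff SL) => i; apply/(KEY i SL) => z.
  by apply/(gauss_iff x).1 => //; rewrite s1.
split.
  move=> x Hx; have [[Hjs HN0] Hg] := Hx; split.
    by apply: in_N0_ext HN0 => i j; rewrite tcoef_f.
  move=> s /andP [s2 sr].
  have HE : forall i j k, size k = s -> jcoef x i j k = tcoef (jet_to_normal x) i j k.
    move=> i j k Hk; rewrite tcoef_f Hk; case: s s2 sr Hk => [|[|s]] //.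
  have [S1 S2] := Hjs s sr.
  split; [exact: sym12_ext S1|split; [exact: symlast_ext S2|]].
  apply: cyclic_ext HE _; apply: fwd_cyc => //.
  by rewrite sr (leq_trans _ s2).
split.
  apply: smooth_coord => -[[i j] w] /=.
  rewrite /jet_to_normal /jcoef /=; case: insub => [w'|].
    by left; exists (i, j, w').
  by right; exists 0.
exists (@normal_to_jet n r); split.
  move=> y [HN0 HNk].
  have Hs1 : forall s, (s <= r)%N -> s <> 1%N -> forall i j k, size k = s ->
      tcoef y i j k = jcoef (normal_to_jet y) i j k.
    by move=> s sr s1 i j k Hk; rewrite jcoef_g Hk; case: eqP.
  have Z1 : forall i j k, size k = 1%N -> jcoef (normal_to_jet y) i j k = 0.
    by move=> i j k Hk; rewrite jcoef_g Hk.
  have JS : forall s, (s <= r)%N -> sym12 (jcoef (normal_to_jet y)) s /\ symlast (jcoef (normal_to_jet y)) s.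
    move=> s sr; case: s sr => [|[|s]] sr.
    - split.
        move=> i j k /size0nil -> ; rewrite !jcoef_g /=; exact: HN0.1.
      move=> i j k k' /size0nil -> P.
      by have := perm_size P => /esym /size0nil <-.
    - split; first by move=> i j k Hk; rewrite !Z1.
      by move=> i j k k' Hk P; rewrite !Z1 // -(perm_size P).
    - have [S1 [S2 _]] := HNk s.+2 ltac:(by rewrite sr).
      split; [exact: sym12_ext (Hs1 _ sr _) S1|exact: symlast_ext (Hs1 _ sr _) S2].
  split; first split.
  - exact: JS.
  - by apply: in_N0_ext HN0 => i j; rewrite jcoef_g.
  apply/gauss_iff => i s z /andP [s1 sr].
  case: s s1 sr => [//|[|s]] _ sr.
    by apply: QT_zero.
  have SL := (JS _ sr).2.
  move: z; apply/(KEY i SL); move: i; apply/(cyclic_iff SL).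
  have [_ [_ C]] := HNk s.+2 ltac:(by rewrite sr).
  exact: cyclic_ext (Hs1 _ sr _) C.
split.
  apply: smooth_coord => -[[i j] w] /=.
  rewrite /normal_to_jet /tcoef /=; case: (size (val w) == 1%N).
    by right; exists 0.
  case: insub => [w'|].
    by left; exists (i, j, w').
  by right; exists 0.
split.
  move=> x Hx; apply: functional_extensionality => -[[i j] w].
  rewrite /normal_to_jet /= tcoef_f.
  case: eqP => [H1|_]; last by rewrite jcoef_val.
  have [[Hjs _] _] := Hx.
  have r1 : (1 <= r)%N by rewrite -H1 (valP w).
  rewrite -jcoef_val order1_zero //; first exact: (Hjs 1%N r1).1.
  apply: fwd_cyc => //; by rewrite r1.
move=> y _; apply: functional_extensionality => -[[i j] w].
rewrite /jet_to_normal /= jcoef_g.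
have /andP [_ H1] := valP w.
by rewrite (negbTE H1) tcoef_val.
Qed.
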